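(* In the setting described in the context, let $v\in\operatorname{Lip}_1(X_h)$ and $\lambda\in\mathbb{R}$ satisfy $\hat F_h^+v=\lambda+v$. Then $\lambda-h\le\rho\le\lambda$, where $\rho$ is the value of the escape rate game played on $\operatorname{Int}C$ with the maps $T_{ab}$.
   Context: Let $C\subset\mathbb{R}^n$ be a pointed closed convex cone, $C^*$ its dual cone, $e^*\in\operatorname{int}C^*$, and $\Delta=\{x\in C:\langle x,e^*\rangle=1\}$. $x\le_C y$ means $y-x\in C$; $\operatorname{Funk}(x,y)=\log\inf\{\lambda>0:x\le_C\lambda y\}$ on $\operatorname{Int}C$; $\operatorname{Hil}(x,y)=\operatorname{Funk}(x,y)+\operatorname{Funk}(y,x)$. Let $\mathcal{A},\mathcal{B}$ be nonempty compact action sets and $(T_{ab})_{(a,b)\in\mathcal{A}\times\mathcal{B}}$ self-maps of $\operatorname{Int}C$ nonexpansive for $\operatorname{Funk}$ (i.e. $\operatorname{Funk}(T_{ab}x,T_{ab}y)\le\operatorname{Funk}(x,y)$), such that for each $x$ the maps $a\mapsto T_{ab}(x)$, $b\mapsto T_{ab}(x)$ are continuous, for each compact $K$ the set $\{T_{ab}(x):(a,b,x)\in\mathcal{A}\times\mathcal{B}\times K\}$ is compact, and each $T_{ab}$ extends continuously (Euclidean topology) to $C$. Small cone assumption: there is a closed cone $K\subset C$ with $T_{ab}(K)\subset K$ for all $a,b$ and $X:=K\cap\Delta\subset\operatorname{relint}\Delta$. For $h>0$, $X_h\subset X$ is a finite set with $X\subset\bigcup_{y\in X_h}\{x:\operatorname{Hil}(x,y)<h\}$.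 $\operatorname{Lip}_1(Y)$ is the set of $f:Y\to\mathbb{R}$ with $f(x)-f(y)\le\operatorname{Funk}(x,y)$ for $x,y\in Y$. $F$ maps $v\in\operatorname{Lip}_1(X)$ to $Fv(x)=\inf_{a\in\mathcal{A}}\sup_{b\in\mathcal{B}}\big[\log\langle T_{ab}(x),e^*\rangle+v\big(T_{ab}(x)/\langle T_{ab}(x),e^*\rangle\big)\big]$; $I_h^+v(x)=\min_{y\in X_h}[v(y)+\operatorname{Funk}(x,y)]$ for $v\in\mathbb{R}^{X_h}$, $x\in X$; $R_h$ is restriction to $X_h$; $\hat F_h^+=R_hFI_h^+$. Escape rate game: from $x_0\in\operatorname{Int}C$, at each turn $k\ge1$ Min chooses $a_k\in\mathcal{A}$, then Max, after observing it, chooses $b_k\in\mathcal{B}$, and $x_k=T_{a_kb_k}(x_{k-1})$. Strategies map finite histories to actions; payoff $J(\sigma,\tau)=\limsup_k\frac1k\operatorname{Funk}(x_k,x_0)$, minimized by Min, maximized by Max. The value $\rho$ is the number such that for every $\epsilon>0$ there exist strategies $\sigma^*,\tau^*$ with $J(\sigma^*,\tau)\le\rho+\epsilon$ and $J(\sigma,\tau^* )\ge\rho-\epsilon$ for all $\sigma,\tau$. *)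

(* Defs.v *)
From HB Require Import structures.
From mathcomp Require Import all_boot all_order all_algebra.
From mathcomp Require Import all_classical all_reals all_analysis.
Set Implicit Arguments. Unset Strict Implicit. Unset Printing Implicit Defensive.
Import Order.TTheory GRing.Theory Num.Theory.
Import numFieldNormedType.Exports.
Local Open Scope classical_set_scope.
Local Open Scope ring_scope.

Section Defs.
Variables (R : realType) (n : nat).
Notation vec := 'rV[R]_n.

Definition inner (x y : vec) : R := \sum_(i < n) x ord0 i * y ord0 i.

Definition is_cone (K : set vec) : Prop :=
  K 0 /\ forall (t : R) x, 0 <= t -> K x -> K (t *: x).

Definition is_convex_cone (C : set vec) : Prop :=
  is_cone C /\ forall x y, C x -> C y -> C (x + y).

Definition pointed (C : set vec) : Prop :=
  forall x, C x -> C (- x) -> x = 0.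

Definition dual_cone (C : set vec) : set vec :=
  [set y | forall x, C x -> 0 <= inner x y].

Definition simplex (C : set vec) (e : vec) : set vec :=
  [set x | C x /\ inner x e = 1].

Definition aff_hull (S : set vec) : set vec :=
  [set y | exists (m : nat) (p : 'I_m -> vec) (w : 'I_m -> R),
      (forall i, S (p i)) /\ \sum_(i < m) w i = 1 /\
      y = \sum_(i < m) w i *: p i].

Definition relint (S : set vec) : set vec :=
  [set x | S x /\ exists2 eps : R, 0 < eps &
      forall y, aff_hull S y -> `|y - x| < eps -> S y].

Definition cone_le (C : set vec) (x y : vec) : Prop := C (y - x).

Definition Funk (C : set vec) (x y : vec) : R :=
  ln (inf [set l : R | 0 < l /\ cone_le C x (l *: y)]).

Definition Hil (C : set vec) (x y : vec) : R := Funk C x y + Funk C y x.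

Definition Lip1 (C : set vec) (Y : set vec) (f : vec -> R) : Prop :=
  forall x y, Y x -> Y y -> f x - f y <= Funk C x y.

Definition Fop (A B : Type) (T : A -> B -> vec -> vec) (e : vec)
    (v : vec -> R) (x : vec) : R :=
  inf [set (sup [set ln (inner (T a b x) e) + v ((inner (T a b x) e)^-1 *: T a b x)
                | b in [set: B]]) | a in [set: A]].

Definition Ihp (C : set vec) (Xh : seq vec) (v : vec -> R) (x : vec) : R :=
  inf [set v y + Funk C x y | y in [set` Xh]].

(* hat F_h^+ = R_h F I_h^+ ; evaluate at points of X_h *)
Definition Fhat (C : set vec) (A B : Type) (T : A -> B -> vec -> vec) (e : vec)
    (Xh : seq vec) (v : vec -> R) (x : vec) : R :=
  Fop T e (Ihp C Xh v) x.

(* Escape rate game.  Since the dynamics are deterministic and x_0 is fixed,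
   a finite history is determined by the past action pairs. *)
Definition min_strategy (A B : Type) := seq (A * B) -> A.
Definition max_strategy (A B : Type) := seq (A * B) -> A -> B.

Fixpoint play (A B : Type) (T : A -> B -> vec -> vec)
    (sigma : min_strategy A B) (tau : max_strategy A B) (x0 : vec) (k : nat)
    : seq (A * B) * vec :=
  match k with
  | 0 => ([::], x0)
  | k'.+1 => let hx := play T sigma tau x0 k' in
             let a := sigma hx.1 in
             let b := tau hx.1 a in
             (rcons hx.1 (a, b), T a b hx.2)
  end.

Definition payoff (C : set vec) (A B : Type) (T : A -> B -> vec -> vec)
    (x0 : vec) (sigma : min_strategy A B) (tau : max_strategy A B) : \bar R :=
  limn_esup (fun k : nat => ((Funk C (play T sigma tau x0 k).2 x0) / k%:R)%:E).

Definition is_game_value (C : set vec) (A B : Type) (T : A -> B -> vec -> vec)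
    (x0 : vec) (rho : R) : Prop :=
  forall eps : R, 0 < eps ->
    exists (sigma_s : min_strategy A B) (tau_s : max_strategy A B),
      (forall tau, (payoff C T x0 sigma_s tau <= (rho + eps)%:E)%E) /\
      (forall sigma, ((rho - eps)%:E <= payoff C T x0 sigma tau_s)%E).

End Defs.

(* Main.v *)
Require Import Defs.
From HB Require Import structures.
From mathcomp Require Import all_boot all_order all_algebra.
From mathcomp Require Import all_classical all_reals all_analysis.
From mathcomp Require Import ring lra.
Import Order.TTheory GRing.Theory Num.Theory.
Import numFieldNormedType.Exports.
Local Open Scope classical_set_scope.
Local Open Scope ring_scope.


Section Inner.
Variables (R : realType) (n : nat).
Implicit Types (x y e : 'rV[R]_n).

Lemma innerDl x y e : inner (x + y) e = inner x e + inner y e.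
Proof. by rewrite /inner -big_split; apply: eq_bigr => i _; rewrite mxE mulrDl. Qed.

Lemma innerZl (t : R) x e : inner (t *: x) e = t * inner x e.
Proof. by rewrite /inner mulr_sumr; apply: eq_bigr => i _; rewrite mxE mulrA. Qed.

Lemma innerNl x e : inner (- x) e = - inner x e.
Proof. by rewrite -scaleN1r innerZl mulN1r. Qed.

Lemma innerBl x y e : inner (x - y) e = inner x e - inner y e.
Proof. by rewrite innerDl innerNl. Qed.

Lemma inner_cont e : continuous (fun x : 'rV[R]_n => inner x e).
Proof.
rewrite /inner.
have -> : (fun x : 'rV[R]_n => \sum_(i < n) x ord0 i * e ord0 i) =
  \sum_(i < n) (fun x : 'rV[R]_n => x ord0 i * e ord0 i).
  by apply: boolp.funext => x; rewrite fct_sumE.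
apply: (big_ind (fun g : 'rV[R]_n -> R => continuous g)).
- exact: (@cst_continuous _ _ (0:R)).
- by move=> f g cf cg y; apply: continuousD; [exact: cf | exact: cg].
- move=> i _ y; apply: (@continuousM _ _ (fun x : 'rV[R]_n => x ord0 i) (fun=> e ord0 i)); [exact: coord_continuous | exact: cst_continuous].
Qed.
End Inner.


Lemma small_t {R : realType} {r M : R} : 0 < r -> 0 <= M ->
  exists2 t, 0 < t & t * M < r.
Proof.
move=> r0 M0; exists (r / (M + 1)); first by rewrite divr_gt0 // ltr_wpDl.
rewrite mulrAC ltr_pdivrMr ?ltr_wpDl //; nra.
Qed.

Section FunkSec.
Variables (R : realType) (n : nat) (C : set 'rV[R]_n) (e p0 : 'rV[R]_n).
Hypothesis Ccc : is_convex_cone C.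
Hypothesis eC : dual_cone C e.
Hypothesis p0e : inner p0 e = 1.
Local Notation vec := 'rV[R]_n.
Implicit Types (x y z w : vec).

Definition SS x y := [set l : R | 0 < l /\ cone_le C x (l *: y)].

Lemma CZ t x : 0 <= t -> C x -> C (t *: x).
Proof. by case: Ccc => [[_ H] _]; apply: H. Qed.
Lemma CD x y : C x -> C y -> C (x + y).
Proof. by case: Ccc => _; apply. Qed.
Lemma CZp t x : 0 < t -> C (t *: x) -> C x.
Proof.
move=> t0 H; have ti : 0 <= t^-1 by rewrite invr_ge0 ltW.
have := @CZ t^-1 _ ti H.
by rewrite scalerA mulVf ?gt_eqF // scale1r.
Qed.
Lemma inner_ge0 x : C x -> 0 <= inner x e.
Proof. by move=> Cx; apply: eC. Qed.

Lemma int_ball x : interior C x ->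
  exists2 r : R, 0 < r & forall d : vec, `|d| < r -> C (x + d).
Proof.
move=> /nbhs_ballP [r r0 H]; exists r => // d hd; apply: H.
by rewrite -ball_normE /= opprD addrA subrr add0r normrN.
Qed.

Lemma ball_int x (r : R) : 0 < r -> (forall d : vec, `|d| < r -> C (x + d)) ->
  interior C x.
Proof.
move=> r0 H; apply/nbhs_ballP; exists r => // y; rewrite -ball_normE /= => hy.
have -> : y = x + (y - x) by rewrite [RHS]addrC subrK.
by apply: H; rewrite -normrN opprB.
Qed.

Lemma int_pos x : interior C x -> 0 < inner x e.
Proof.
move=> /int_ball [r r0 H].
have [t t0 ht] := small_t r0 (normr_ge0 p0).
have := H (- (t *: p0)); rewrite normrN normrZ gtr0_norm // => /(_ ht).
move/inner_ge0; rewrite innerBl innerZl p0e mulr1 subr_ge0.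
by move/(lt_le_trans t0).
Qed.

Lemma S_ne x y : interior C y -> SS x y !=set0.
Proof.
move=> /int_ball [r r0 H].
have [t t0 ht] := small_t r0 (normr_ge0 x).
have := H (- (t *: x)); rewrite normrN normrZ gtr0_norm // => /(_ ht) Cyx.
exists t^-1; split; first by rewrite invr_gt0.
rewrite /cone_le.
have -> : t^-1 *: y - x = t^-1 *: (y + - (t *: x)).
  by rewrite scalerDr scalerN scalerA mulVf ?gt_eqF // scale1r.
by apply: CZ => //; rewrite ltW // invr_gt0.
Qed.

Lemma S_lb x y l : 0 < inner y e -> SS x y l -> inner x e / inner y e <= l.
Proof.
move=> y0 [l0 /inner_ge0]; rewrite innerBl innerZl subr_ge0 => h.
by rewrite ler_pdivrMr.
Qed.

Lemma S_mul x y z l1 l2 : SS x y l1 -> SS y z l2 -> SS x z (l1 * l2).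
Proof.
move=> [l10 h1] [l20 h2]; split; first exact: mulr_gt0.
rewrite /cone_le.
have -> : (l1 * l2) *: z - x = l1 *: (l2 *: z - y) + (l1 *: y - x).
  by rewrite scalerBr scalerA addrA subrK.
by apply: CD => //; apply: CZ => //; rewrite ltW.
Qed.

Lemma S_hasl x y : has_lbound (SS x y).
Proof. by exists 0 => l [l0 _]; rewrite ltW. Qed.

Lemma infS_ge x y : 0 < inner y e -> interior C y ->
  inner x e / inner y e <= inf (SS x y).
Proof.
move=> y0 iy; apply: lb_le_inf; first exact: S_ne.
by move=> l hl; apply: S_lb.
Qed.

Lemma infS_pos x y : 0 < inner x e -> interior C y -> 0 < inf (SS x y).
Proof.
move=> x0 iy; have y0 := int_pos _ iy.
by apply: lt_le_trans (@infS_ge x y y0 iy); rewrite divr_gt0.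
Qed.

Lemma FunkE x y : Funk C x y = ln (inf (SS x y)).
Proof. by []. Qed.

Lemma Funk_le x y l : 0 < inner x e -> interior C y -> SS x y l ->
  Funk C x y <= ln l.
Proof.
move=> x0 iy hl; rewrite FunkE ler_ln ?posrE ?infS_pos //; last by case: hl.
exact: (ge_inf (S_hasl x y)).
Qed.

Lemma Funk_ge x y : 0 < inner x e -> interior C y ->
  ln (inner x e / inner y e) <= Funk C x y.
Proof.
move=> x0 iy; have y0 := int_pos _ iy.
rewrite FunkE ler_ln ?posrE ?infS_pos ?divr_gt0 //.
exact: infS_ge.
Qed.

Lemma Funk_tri x y z : 0 < inner x e -> interior C y -> interior C z ->
  Funk C x z <= Funk C x y + Funk C y z.
Proof.
move=> x0 iy iz; have y0 := int_pos _ iy; have z0 := int_pos _ iz.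
rewrite !FunkE.
set a := inf (SS x y); set b := inf (SS y z); set c := inf (SS x z).
have a0 : 0 < a by apply: infS_pos.
have b0 : 0 < b by apply: infS_pos.
have c0 : 0 < c by apply: infS_pos.
have H1 l1 l2 : SS x y l1 -> SS y z l2 -> c <= l1 * l2.
  by move=> h1 h2; apply: (ge_inf (S_hasl x z)); apply: S_mul h1 h2.
have H2 l2 : SS y z l2 -> c / l2 <= a.
  move=> h2; have l20 : 0 < l2 by case: h2.
  apply: lb_le_inf; first exact: S_ne.
  by move=> l1 h1; rewrite ler_pdivrMr // H1.
have H3 : c / a <= b.
  apply: lb_le_inf; first exact: S_ne.
  move=> l2 h2; have l20 : 0 < l2 by case: h2.
  by rewrite ler_pdivrMr // mulrC -ler_pdivrMr // H2.
rewrite -lnM ?posrE // ler_ln ?posrE ?mulr_gt0 //.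
by rewrite -ler_pdivrMl // mulrC.
Qed.

Lemma CZe t x : 0 < t -> C (t *: x) = C x.
Proof.
move=> t0; rewrite propeqE; split; first exact: CZp.
by apply: CZ; rewrite ltW.
Qed.

Lemma Funk_hom x y (a b : R) : 0 < a -> 0 < b -> 0 < inner x e -> interior C y ->
  Funk C (a *: x) (b *: y) = ln a - ln b + Funk C x y.
Proof.
move=> a0 b0 x0 iy; rewrite !FunkE.
set k := a / b.
have k0 : 0 < k by rewrite divr_gt0.
have mem1 m : SS x y m -> SS (a *: x) (b *: y) (k * m).
  move=> [m0 hm]; split; first by rewrite mulr_gt0.
  rewrite /cone_le.
  have -> : (k * m) *: (b *: y) - a *: x = a *: (m *: y - x).
    rewrite scalerBr !scalerA; congr (_ *: _ - _); rewrite /k.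
    by field; rewrite gt_eqF.
  by rewrite CZe.
have mem2 l : SS (a *: x) (b *: y) l -> SS x y (l / k).
  move=> [l0 hl]; split; first by rewrite divr_gt0.
  move: hl; rewrite /cone_le.
  have -> : l *: (b *: y) - a *: x = a *: ((l / k) *: y - x).
    rewrite scalerBr !scalerA; congr (_ *: _ - _); rewrite /k.
    by field; rewrite !gt_eqF.
  by rewrite CZe.
have ne : SS x y !=set0 by apply: S_ne.
have neT : SS (a *: x) (b *: y) !=set0.
  by case: ne => m hm; exists (k * m); apply: mem1.
set I := inf (SS x y); set J := inf (SS (a *: x) (b *: y)).
have I0 : 0 < I by apply: infS_pos.
have -> : J = k * I.
  apply/eqP; rewrite eq_le; apply/andP; split.
    rewrite -ler_pdivrMl //; apply: lb_le_inf => // m hm.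
    rewrite ler_pdivrMl //; apply: (ge_inf (S_hasl _ _)); exact: mem1.
  apply: lb_le_inf => // l hl.
  rewrite -ler_pdivlMl // mulrC; apply: (ge_inf (S_hasl _ _)); exact: mem2.
by rewrite lnM ?posrE // ln_div ?posrE.
Qed.

Lemma S_unif y (M : R) : interior C y -> 0 <= M ->
  exists2 L, 0 < L & forall w, `|w| <= M -> SS w y L.
Proof.
move=> /int_ball [r r0 H] M0.
have [t t0 ht] := small_t r0 M0.
exists t^-1; first by rewrite invr_gt0.
move=> w hw; split; first by rewrite invr_gt0.
have : `|- (t *: w)| < r.
  rewrite normrN normrZ gtr0_norm //; apply: le_lt_trans ht.
  by rewrite ler_pM2l.
move/H => Cyx; rewrite /cone_le.
have -> : t^-1 *: y - w = t^-1 *: (y + - (t *: w)).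
  by rewrite scalerDr scalerN scalerA mulVf ?gt_eqF // scale1r.
by apply: CZ => //; rewrite ltW // invr_gt0.
Qed.
End FunkSec.


Section SeqLemmas.
Variables (R : realType) (T : eqType).

Lemma seq_argmin (f : T -> R) {s : seq T} : s != [::] ->
  exists2 y, y \in s & forall z, z \in s -> f y <= f z.
Proof.
elim: s => // x s IH _.
case: (eqVneq s [::]) => [->|sne].
  by exists x; rewrite ?mem_head // => z; rewrite inE => /eqP ->.
have [y ys hy] := IH sne.
case: (leP (f x) (f y)) => hxy.
  exists x; first exact: mem_head.
  move=> z; rewrite inE => /orP [/eqP ->//|/hy]; exact: le_trans.
exists y; first by rewrite inE ys orbT.
move=> z; rewrite inE => /orP [/eqP ->|/hy//]; exact: ltW.
Qed.

Lemma seq_ub (f : T -> R) (s : seq T) : exists M, forall z, z \in s -> f z <= M.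
Proof.
elim: s => [|x s [M HM]]; first by exists 0.
exists (Num.max (f x) M) => z; rewrite inE => /orP [/eqP ->|/HM h].
  by rewrite le_max lexx.
by rewrite le_max h orbT.
Qed.

Lemma seq_lb (f : T -> R) (s : seq T) : exists M, forall z, z \in s -> M <= f z.
Proof.
have [M HM] := seq_ub (fun z => - f z) s.
by exists (- M) => z /HM; rewrite lerNl.
Qed.

Lemma inf_seq (f : T -> R) {s : seq T} : s != [::] ->
  exists2 y, y \in s & inf [set f z | z in [set` s]] = f y.
Proof.
move=> sne; have [y ys hy] := seq_argmin f sne.
exists y => //; apply/eqP; rewrite eq_le; apply/andP; split.
  apply: (ge_inf); last by exists y.
  by exists (f y) => _ [z zs <-]; apply: hy.
apply: lb_le_inf; first by exists (f y), y.
by move=> _ [z zs <-]; apply: hy.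
Qed.

Lemma inf_seq_le (f : T -> R) (s : seq T) z : z \in s ->
  inf [set f z | z in [set` s]] <= f z.
Proof.
move=> zs; have sne : s != [::] by case: s zs.
have [y' ys' hy'] := seq_argmin f sne.
by apply: ge_inf; [exists (f y') => _ [w ws <-]; apply: hy'|exists z].
Qed.
End SeqLemmas.
Arguments seq_argmin {R T} f {s}.
Arguments seq_ub {R T} f s.
Arguments seq_lb {R T} f s.
Arguments inf_seq {R T} f {s}.
Arguments inf_seq_le {R T} f s z.


Lemma big_N {R : realType} (D d : R) : 0 < d ->
  exists N : nat, forall k : nat, (N <= k)%N -> 0 < (k%:R : R) /\ `|D| <= d * k%:R.
Proof.
move=> d0; exists (Num.truncn (`|D| / d)).+1 => k hk; split.
  by rewrite ltr0n; apply: leq_trans hk.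
have h1 := truncnS_gt (`|D| / d).
have h2 : ((Num.truncn (`|D| / d)).+1%:R <= k%:R :> R) by rewrite ler_nat.
have h3 : `|D| / d <= k%:R by apply: ltW; apply: lt_le_trans h2.
by rewrite mulrC -ler_pdivrMr.
Qed.

Lemma payoff_ub {R : realType} (f : nat -> R) (c D : R) :
  (forall k, f k <= c * k%:R + D) -> forall d, 0 < d ->
  (limn_esup (fun k => (f k / k%:R)%:E) <= (c + d)%:E)%E.
Proof.
move=> hf d d0; have [N HN] := big_N D d d0.
rewrite limn_esup_lim; apply: lime_le; first exact: is_cvg_esups.
exists N => // m /= hm; apply: ge_ereal_sup => _ [k /= hk <-].
have [k0 hkD] := HN k (leq_trans hm hk).
rewrite lee_fin ler_pdivrMr //.
have := hf k; have := ler_norm D; nra.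
Qed.

Lemma payoff_lb {R : realType} (f : nat -> R) (c D : R) :
  (forall k, c * k%:R - D <= f k) -> forall d, 0 < d ->
  ((c - d)%:E <= limn_esup (fun k => (f k / k%:R)%:E))%E.
Proof.
move=> hf d d0; have [N HN] := big_N D d d0.
rewrite limn_esup_lim; apply: lime_ge; first exact: is_cvg_esups.
exists N => // m /= hm.
apply: (@le_trans _ _ ((f (maxn m N) / (maxn m N)%:R)%:E)); last first.
  by apply: ereal_sup_ubound; exists (maxn m N) => //=; rewrite leq_maxl.
have [k0 hkD] := HN (maxn m N) (leq_maxr _ _).
rewrite lee_fin ler_pdivlMr //.
have := hf (maxn m N); have := ler_norm D; nra.
Qed.


Section Main.
Variables (R : realType) (n : nat) (C : set 'rV[R]_n) (e : 'rV[R]_n).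
Variables (A B : Type) (T : A -> B -> 'rV[R]_n -> 'rV[R]_n).
Variables (Xh : seq 'rV[R]_n) (v : 'rV[R]_n -> R) (p0 : 'rV[R]_n).
Hypothesis Ccc : is_convex_cone C.
Hypothesis eC : dual_cone C e.
Hypothesis p0X : p0 \in Xh.
Hypothesis Xh_s : forall y, y \in Xh -> inner y e = 1.
Hypothesis Xh_int : forall y, y \in Xh -> interior C y.
Hypothesis HT1 : forall a b x, interior C x -> interior C (T a b x).
Hypothesis HT2 : forall a b x y, interior C x -> interior C y ->
     Funk C (T a b x) (T a b y) <= Funk C x y.
Local Notation vec := 'rV[R]_n.
Implicit Types (x y z w : vec).

Let p0e : inner p0 e = 1. Proof. exact: Xh_s. Qed.
Let Xne : Xh != [::]. Proof. by case: Xh p0X. Qed.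

Let ipos {x} : interior C x -> 0 < inner x e := @int_pos R n C e p0 eC p0e x.
Let Fhom {x y a b} := @Funk_hom R n C e p0 Ccc eC p0e x y a b.
Let Ftri {x y z} := @Funk_tri R n C e p0 Ccc eC p0e x y z.
Let Fle {x y l} := @Funk_le R n C e p0 Ccc eC p0e x y l.
Let Fge {x y} := @Funk_ge R n C e p0 Ccc eC p0e x y.
Let iball {x} := @int_ball R n C x.
Let bint {x r} := @ball_int R n C x r.
Let CZ' {t x} := @CZ R n C Ccc t x.
Let Sunif {y M} := @S_unif R n C Ccc y M.

Definition uu := Ihp C Xh v.
Definition nrm w := (inner w e)^-1 *: w.
Definition ut w := ln (inner w e) + uu (nrm w).

Lemma nrm_inner w : 0 < inner w e -> inner (nrm w) e = 1.
Proof. by move=> w0; rewrite /nrm innerZl mulVf ?gt_eqF. Qed.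

Lemma nrmK w : 0 < inner w e -> inner w e *: nrm w = w.
Proof. by move=> w0; rewrite /nrm scalerA mulfV ?gt_eqF // scale1r. Qed.

Lemma int_scale w (c : R) : 0 < c -> interior C w -> interior C (c *: w).
Proof.
move=> c0 /iball [r r0 H]; apply: (@bint _ (c * r)).
  exact: mulr_gt0.
move=> d hd.
have -> : c *: w + d = c *: (w + c^-1 *: d).
  by rewrite scalerDr scalerA mulfV ?gt_eqF // scale1r.
apply: CZ' => //; first exact: ltW.
apply: H; rewrite normrZ gtr0_norm ?invr_gt0 // mulrC ltr_pdivrMr //.
by rewrite mulrC.
Qed.

Lemma nrm_int {w} : interior C w -> interior C (nrm w).
Proof. by move=> iw; apply: int_scale => //; rewrite invr_gt0 ipos. Qed.

Lemma uu_min z : exists2 y, y \in Xh & uu z = v y + Funk C z y.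
Proof. rewrite /uu /Ihp; exact: (inf_seq (fun y => v y + Funk C z y) Xne). Qed.

Lemma uu_le z y : y \in Xh -> uu z <= v y + Funk C z y.
Proof. rewrite /uu /Ihp; exact: (inf_seq_le (fun y => v y + Funk C z y)). Qed.

Lemma uu_lip z1 z2 : 0 < inner z1 e -> interior C z2 ->
  uu z1 - uu z2 <= Funk C z1 z2.
Proof.
move=> z10 iz2; have [y ys ->] := uu_min z2.
have h1 := uu_le z1 y ys.
have h2 : Funk C z1 y <= Funk C z1 z2 + Funk C z2 y by apply: Ftri => //; apply: Xh_int.
lra.
Qed.

Lemma Funk_nrm_l {w y} : interior C w -> interior C y ->
  Funk C w y = ln (inner w e) + Funk C (nrm w) y.
Proof.
move=> iw iy; have w0 := ipos iw.
have := @Fhom (nrm w) y (inner w e) 1 w0 ltr01.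
rewrite nrmK // scale1r ln1 subr0; apply => //.
by rewrite nrm_inner.
Qed.

Lemma Funk_nrm_r {w y} : interior C w -> 0 < inner y e ->
  Funk C y w = - ln (inner w e) + Funk C y (nrm w).
Proof.
move=> iw y0; have w0 := ipos iw.
have := @Fhom y (nrm w) 1 (inner w e) ltr01 w0.
rewrite nrmK // scale1r ln1 add0r; apply => //.
exact: nrm_int.
Qed.

Lemma ut_lip {w1 w2} : interior C w1 -> interior C w2 ->
  ut w1 - ut w2 <= Funk C w1 w2.
Proof.
move=> i1 i2; have w10 := ipos i1; have w20 := ipos i2.
have := @Fhom (nrm w1) (nrm w2) (inner w1 e) (inner w2 e) w10 w20.
rewrite !nrmK // => ->; last exact: nrm_int.
  have := @uu_lip (nrm w1) (nrm w2).
  rewrite nrm_inner // => /(_ ltr01 (nrm_int i2)).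
  rewrite /ut; lra.
by rewrite nrm_inner.
Qed.

Variables (lam h : R) (K : set 'rV[R]_n) (a0 : A) (b0 : B).
Hypothesis eig : forall y, y \in Xh -> Fhat C T e Xh v y = lam + v y.
Hypothesis Himg : forall y, y \in Xh -> exists2 m : R, 0 < m &
  exists M : R, forall a b, m <= inner (T a b y) e /\ `|T a b y| <= M.
Hypothesis Kcone : forall (t : R) x, 0 < t -> K x -> K (t *: x).
Hypothesis cover : forall x, K x -> simplex C e x ->
  exists2 y, y \in Xh & Hil C x y < h.

Lemma ut_up {w y} : interior C w -> y \in Xh -> ut w <= v y + Funk C w y.
Proof.
move=> iw ys; rewrite (Funk_nrm_l iw (Xh_int _ ys)) /ut.
have := uu_le (nrm w) y ys; lra.
Qed.

Lemma ut_low {M : R} {w} : (forall y, y \in Xh -> M <= v y) -> interior C w ->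
  M + ln (inner w e) <= ut w.
Proof.
move=> HM iw; have w0 := ipos iw.
have [y ys hy] := uu_min (nrm w).
have := @Fge (nrm w) y; rewrite nrm_inner // Xh_s // divr1 ln1.
move=> /(_ ltr01 (Xh_int _ ys)) hF.
have := HM y ys; rewrite /ut hy; lra.
Qed.

Definition Sa y a := [set ut (T a b y) | b in [set: B]].

Lemma Fhat_eq y : Fhat C T e Xh v y = inf [set sup (Sa y a) | a in [set: A]].
Proof. by []. Qed.

Lemma Sa_bounds {y} : y \in Xh -> exists U, exists Lo,
  forall a b, Lo <= ut (T a b y) <= U.
Proof.
move=> ys; have [m m0 [M HM]] := Himg _ ys.
have M0 : 0 <= M by apply: le_trans (HM a0 b0).2.
have [L L0 HL] := Sunif (Xh_int _ ys) M0.
have [M1 HM1] := seq_lb v Xh.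
exists (v y + ln L), (M1 + ln m) => a b.
have iT := HT1 a b _ (Xh_int _ ys).
apply/andP; split.
  apply: le_trans (ut_low HM1 iT); rewrite lerD2l ler_ln ?posrE //.
    by case: (HM a b).
  exact: lt_le_trans (HM a b).1.
apply: le_trans (ut_up iT ys) _; rewrite lerD2l.
apply: Fle => //; first exact: ipos.
  exact: Xh_int.
by apply: HL; case: (HM a b).
Qed.

Lemma min_step_y {y} {eps : R} : y \in Xh -> 0 < eps ->
  exists a, forall b, ut (T a b y) <= lam + v y + eps.
Proof.
move=> ys e0; have [U [Lo HUL]] := Sa_bounds ys.
have hs a : has_ubound (Sa y a).
  by exists U => _ [b _ <-]; case/andP: (HUL a b).
have hE : has_inf [set sup (Sa y a) | a in [set: A]].
  split; first by exists (sup (Sa y a0)), a0.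
  exists Lo => _ [a _ <-].
  have hb : ut (T a b0 y) <= sup (Sa y a) by apply: (ub_le_sup (hs a)); exists b0.
  by apply: le_trans hb; case/andP: (HUL a b0).
have [_ [a _ <-] ha] := inf_adherent e0 hE.
exists a => b; rewrite -eig // Fhat_eq.
apply: le_trans (ltW ha); apply: (ub_le_sup (hs a)).
by exists b.
Qed.

Lemma max_step_y {y} {eps : R} a : y \in Xh -> 0 < eps ->
  exists b, lam + v y - eps <= ut (T a b y).
Proof.
move=> ys e0; have [U [Lo HUL]] := Sa_bounds ys.
have hs a' : has_sup (Sa y a').
  split; first by exists (ut (T a' b0 y)), b0.
  by exists U => _ [b _ <-]; case/andP: (HUL a' b).
have hE : has_lbound [set sup (Sa y a) | a in [set: A]].
  exists Lo => _ [a' _ <-].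
  have hb : ut (T a' b0 y) <= sup (Sa y a') by apply: (ub_le_sup (hs a').2); exists b0.
  by apply: le_trans hb; case/andP: (HUL a' b0).
have [_ [b _ <-] hb] := sup_adherent e0 (hs a).
exists b; apply: ltW; apply: le_lt_trans hb.
rewrite lerD2r -eig // Fhat_eq.
by apply: (ge_inf hE); exists a.
Qed.

Lemma min_step w (eps : R) : interior C w -> 0 < eps ->
  exists a, forall b, ut (T a b w) <= ut w + lam + eps.
Proof.
move=> iw e0; have [y ys hy] := uu_min (nrm w).
have [a ha] := min_step_y ys e0.
exists a => b; have iy := Xh_int _ ys.
have h1 := ut_lip (HT1 a b _ iw) (HT1 a b _ iy).
have h2 := HT2 a b _ _ iw iy.
have h3 := Funk_nrm_l iw iy.
have h4 := ha b.
have h5 : ut w = ln (inner w e) + (v y + Funk C (nrm w) y) by rewrite /ut hy.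
move: h1 h2 h3 h4 h5.
move: (ut (T a b w)) (ut (T a b y)) (ut w) (Funk C (T a b w) (T a b y)) (Funk C w y).
move: (Funk C (nrm w) y) (ln (inner w e)) (v y) => *; lra.
Qed.

Lemma max_step w (eps : R) a : K w -> interior C w -> 0 < eps ->
  exists b, ut w + lam - h - eps <= ut (T a b w).
Proof.
move=> Kw iw e0; have w0 := ipos iw.
have Kn : K (nrm w) by apply: Kcone => //; rewrite invr_gt0.
have Sn : simplex C e (nrm w).
  by split; [apply: interior_subset; exact: nrm_int|exact: nrm_inner].
have [y ys hH] := cover _ Kn Sn.
have [b hb] := max_step_y a ys e0.
exists b; have iy := Xh_int _ ys.
have h1 := ut_lip (HT1 a b _ iy) (HT1 a b _ iw).
have h2 := HT2 a b _ _ iy iw.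
have y0 : 0 < inner y e by rewrite Xh_s.
have h3 := Funk_nrm_r iw y0.
have h4 := uu_le (nrm w) y ys.
move: hH; rewrite /Hil => hH.
have h5 : ut w <= ln (inner w e) + (v y + Funk C (nrm w) y) by rewrite /ut lerD2l.
move: h1 h2 h3 h4 h5 hb hH.
move: (ut (T a b w)) (ut (T a b y)) (ut w) (Funk C (T a b y) (T a b w)) (Funk C y w).
move: (Funk C (nrm w) y) (Funk C y (nrm w)) (ln (inner w e)) (v y) (uu (nrm w)) => *; lra.
Qed.

Lemma Funk_p_up : exists D, forall w, interior C w -> Funk C w p0 <= ut w + D.
Proof.
have [D HD] := seq_ub (fun y => Funk C y p0 - v y) Xh.
exists D => w iw; have w0 := ipos iw.
have [y ys hy] := uu_min (nrm w).
have ip := Xh_int _ p0X.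
have h1 := Funk_nrm_l iw ip.
have h2 := @Ftri (nrm w) y p0.
rewrite nrm_inner // in h2; have {h2} h2 := h2 ltr01 (Xh_int _ ys) ip.
have h3 := HD y ys.
have h5 : ut w = ln (inner w e) + (v y + Funk C (nrm w) y) by rewrite /ut hy.
move: h1 h2 h3 h5.
move: (ut w) (Funk C w p0) (Funk C (nrm w) p0) (Funk C (nrm w) y) (Funk C y p0).
move: (ln (inner w e)) (v y) => *; lra.
Qed.

Hypothesis HK : forall a b x, K x -> K (T a b x).
Hypothesis p0K : K p0.
Variable x0 : 'rV[R]_n.
Hypothesis ix0 : interior C x0.

Definition stateOf (s : seq (A * B)) := foldl (fun x ab => T ab.1 ab.2 x) p0 s.

Lemma play_hist sg tu x y k : (play T sg tu x k).1 = (play T sg tu y k).1.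
Proof. by elim: k => //= k ->. Qed.

Lemma play_state sg tu k : (play T sg tu p0 k).2 = stateOf (play T sg tu p0 k).1.
Proof. by elim: k => //= k IH; rewrite /stateOf in IH *; rewrite foldl_rcons /= -IH. Qed.

Lemma play_int sg tu x k : interior C x -> interior C (play T sg tu x k).2.
Proof. by move=> ix; elim: k => //= k IH; apply: HT1. Qed.

Lemma play_K sg tu k : K (play T sg tu p0 k).2.
Proof. by elim: k => //= k IH; apply: HK. Qed.

Lemma play_dist sg tu x y k : interior C x -> interior C y ->
  Funk C (play T sg tu x k).2 (play T sg tu y k).2 <= Funk C x y.
Proof.
move=> ix iy; elim: k => //= k IH.
rewrite (play_hist sg tu x y k).
apply: le_trans IH; apply: HT2; exact: play_int.
Qed.

Lemma game_compare sg tu : exists D, forall k,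
  Funk C (play T sg tu x0 k).2 x0 <= Funk C (play T sg tu p0 k).2 p0 + D /\
  Funk C (play T sg tu p0 k).2 p0 - D <= Funk C (play T sg tu x0 k).2 x0.
Proof.
have ip := Xh_int _ p0X.
exists (Funk C x0 p0 + Funk C p0 x0) => k.
set xs := (play T sg tu x0 k).2; set ys := (play T sg tu p0 k).2.
have ixs : interior C xs by apply: play_int.
have iys : interior C ys by apply: play_int.
have h1 : Funk C xs x0 <= Funk C xs ys + Funk C ys x0 by apply: Ftri => //; exact: ipos.
have h2 : Funk C ys x0 <= Funk C ys p0 + Funk C p0 x0 by apply: Ftri => //; exact: ipos.
have h3 : Funk C xs ys <= Funk C x0 p0 by apply: play_dist.
have h4 : Funk C ys p0 <= Funk C ys xs + Funk C xs p0 by apply: Ftri => //; exact: ipos.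
have h5 : Funk C xs p0 <= Funk C xs x0 + Funk C x0 p0 by apply: Ftri => //; exact: ipos.
have h6 : Funk C ys xs <= Funk C p0 x0 by apply: play_dist.
move: h1 h2 h3 h4 h5 h6.
move: (Funk C xs x0) (Funk C xs ys) (Funk C ys x0) (Funk C ys p0) (Funk C p0 x0).
move: (Funk C x0 p0) (Funk C ys xs) (Funk C xs p0) => *; split; lra.
Qed.

Lemma payoffE sg tu : payoff C T x0 sg tu =
  limn_esup (fun k => ((Funk C (play T sg tu x0 k).2 x0) / k%:R)%:E).
Proof. by []. Qed.

Lemma upper_game (eps : R) : 0 < eps -> exists sg : min_strategy A B,
  forall tu d, 0 < d -> (payoff C T x0 sg tu <= (lam + eps + d)%:E)%E.
Proof.
move=> e0.
have : forall w, exists a, interior C w -> forall b, ut (T a b w) <= ut w + lam + eps.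
  move=> w; case: (pselect (interior C w)) => iw.
    by have [a ha] := min_step w eps iw e0; exists a.
  by exists a0.
case/choice => f Hf.
exists (fun s => f (stateOf s)) => tu d d0.
set sg := (fun s => f (stateOf s)).
have [D HD] := game_compare sg tu.
have [D3 HD3] := Funk_p_up.
have hu k : ut (play T sg tu p0 k).2 <= ut p0 + (lam + eps) * k%:R.
  elim: k => [|k IH] /=; first by rewrite mulr0 addr0.
  have iy : interior C (play T sg tu p0 k).2 by apply: play_int; exact: Xh_int.
  rewrite /sg -play_state.
  apply: le_trans (Hf _ iy _) _.
  rewrite -natr1 mulrDr mulr1; lra.
rewrite payoffE; apply: (payoff_ub _ _ (ut p0 + D3 + D)) => // k.
have [h1 _] := HD k.
have h2 := HD3 _ (play_int sg tu p0 k (Xh_int _ p0X)).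
have h3 := hu k.
move: h1 h2 h3.
move: (Funk C (play T sg tu x0 k).2 x0) (Funk C (play T sg tu p0 k).2 p0).
move: (ut (play T sg tu p0 k).2) ((lam + eps) * k%:R) => *.
lra.
Qed.

Lemma lower_game (eps : R) : 0 < eps -> exists tu : max_strategy A B,
  forall sg d, 0 < d -> ((lam - h - eps - d)%:E <= payoff C T x0 sg tu)%E.
Proof.
move=> e0.
have : forall wa : 'rV[R]_n * A, exists b, K wa.1 -> interior C wa.1 ->
    ut wa.1 + lam - h - eps <= ut (T wa.2 b wa.1).
  move=> [w a]; case: (pselect (K w /\ interior C w)) => [[Kw iw]|nw].
    by have [b hb] := max_step w eps a Kw iw e0; exists b.
  by exists b0 => /= Kw iw; exfalso; apply: nw.
case/choice => g Hg.
exists (fun s a => g (stateOf s, a)) => sg d d0.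
set tu := (fun s a => g (stateOf s, a)).
have [D HD] := game_compare sg tu.
have hu k : ut p0 + (lam - h - eps) * k%:R <= ut (play T sg tu p0 k).2.
  elim: k => [|k IH] /=; first by rewrite mulr0 addr0.
  have iy : interior C (play T sg tu p0 k).2 by apply: play_int; exact: Xh_int.
  have Ky := play_K sg tu k.
  rewrite /tu -play_state.
  have := Hg ((play T sg tu p0 k).2, sg (play T sg tu p0 k).1) Ky iy.
  rewrite /=; apply: le_trans.
  rewrite -natr1 mulrDr mulr1; lra.
rewrite payoffE; apply: (payoff_lb _ _ D) => // k.
have [_ h1] := HD k.
have iy : interior C (play T sg tu p0 k).2 by apply: play_int; exact: Xh_int.
have h2 := ut_lip iy (Xh_int _ p0X).
have h3 := hu k.
move: h1 h2 h3.
move: (Funk C (play T sg tu x0 k).2 x0) (Funk C (play T sg tu p0 k).2 p0).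
move: (ut (play T sg tu p0 k).2) ((lam - h - eps) * k%:R) => *.
lra.
Qed.
End Main.


Section Relint.
Variables (R : realType) (n : nat) (C : set 'rV[R]_n) (e : 'rV[R]_n).
Hypothesis Ccc : is_convex_cone C.
Hypothesis eC : dual_cone C e.
Let CZ' {t x} := @CZ R n C Ccc t x.
Let CD' {x y} := @CD R n C Ccc x y.

Lemma relint_int (x0 y : 'rV[R]_n) : interior C x0 ->
  relint (simplex C e) y -> interior C y.
Proof.
move=> ix0 [[Cy ye] [eps eps0 Heps]].
have c0 : 0 < inner x0 e := @int_pos R n C e y eC ye x0 ix0.
set q0 := (inner x0 e)^-1 *: x0.
have q0e : inner q0 e = 1 by rewrite /q0 innerZl mulVf ?gt_eqF.
have [r0 r00 Hq] : exists2 r0 : R, 0 < r0 & forall d, `|d| < r0 -> C (q0 + d).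
  have [r r0 H] := @int_ball R n C x0 ix0.
  exists ((inner x0 e)^-1 * r); first by rewrite mulr_gt0 // invr_gt0.
  move=> d hd.
  have -> : q0 + d = (inner x0 e)^-1 *: (x0 + inner x0 e *: d).
    by rewrite scalerDr scalerA mulVf ?gt_eqF // scale1r.
  apply: CZ'; first by rewrite ltW // invr_gt0.
  apply: H; rewrite normrZ gtr0_norm // mulrC -ltr_pdivlMr // mulrC //.
have Cq0 : C q0 by have := Hq 0; rewrite normr0 addr0; apply.
have [t t0 ht] := small_t eps0 (normr_ge0 (y - q0)).
set z := y + t *: (y - q0).
have Dz : simplex C e z.
  apply: Heps; last by rewrite /z addrAC subrr add0r normrZ gtr0_norm.
  exists 2%N, (fun i : 'I_2 => if val i == 0%N then y else q0),
    (fun i : 'I_2 => if val i == 0%N then 1 + t else - t).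
  split; first by move=> i; case: ifP => _; split.
  split; first by rewrite !big_ord_recl big_ord0 /=; ring.
  rewrite !big_ord_recl big_ord0 /= /z addr0.
  by rewrite scalerBr scalerDl scale1r scaleNr addrA.
have Cz : C z by case: Dz.
set s := t / (1 + t).
have s0 : 0 < s by rewrite divr_gt0 // ltr_wpDl.
have s1 : 0 <= 1 - s.
  by rewrite subr_ge0 ler_pdivrMr ?ltr_wpDl // mul1r lerDr.
apply: (@ball_int R n C y (s * r0)); first exact: mulr_gt0.
move=> d hd.
have -> : y + d = (1 - s) *: z + s *: (q0 + s^-1 *: d).
  have e1 : (1 - s) * (1 + t) = 1.
    by rewrite /s; field; rewrite gt_eqF // ltr_wpDl.
  have e2 : (1 - s) * t = s.
    by rewrite /s; field; rewrite gt_eqF // ltr_wpDl.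
  have -> : z = (1 + t) *: y - t *: q0.
    by rewrite /z scalerBr scalerDl scale1r addrA.
  rewrite scalerBr !scalerA e1 e2 scale1r scalerDr [s *: (s^-1 *: d)]scalerA mulfV ?gt_eqF //.
  by rewrite scale1r /q0 scalerA addrA subrK.
apply: CD'; first exact: CZ'.
apply: CZ'; first exact: ltW.
apply: Hq; rewrite normrZ gtr0_norm ?invr_gt0 // mulrC ltr_pdivrMr //.
by rewrite mulrC.
Qed.
End Relint.

Lemma img_bd (R : realType) (n : nat) (C : set 'rV[R]_n) (e p : 'rV[R]_n)
  (A B : Type) (T : A -> B -> 'rV[R]_n -> 'rV[R]_n) (a0 : A) (b0 : B) y :
  dual_cone C e -> inner p e = 1 ->
  (forall a b x, interior C x -> interior C (T a b x)) ->
  interior C y ->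
  compact [set T q.1.1 q.1.2 q.2 | q in [set q : (A * B) * 'rV[R]_n | [set y] q.2]] ->
  exists2 m : R, 0 < m & exists M : R, forall a b,
    m <= inner (T a b y) e /\ `|T a b y| <= M.
Proof.
move=> eC pe HT1 iy.
set I := [set T q.1.1 q.1.2 q.2 | q in _] => cI.
have memI a b : I (T a b y) by exists ((a, b), y).
have Iint w : I w -> interior C w.
  by case=> [[[a b] x] /= -> <-]; apply: HT1.
have [c cI' hc] := compact_EVT_min (ex_intro _ _ (memI a0 b0)) cI
  (@continuous_subspaceT _ _ I _ (@inner_cont R n e)).
have m0 : 0 < inner c e.
  by apply: (@int_pos R n C e p eC pe); apply: Iint; rewrite inE in cI'.
exists (inner c e) => //.
have [M [_ HM]] := compact_bounded cI.
exists (M + 1) => a b; split.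
  by have := hc (T a b y); rewrite inE; apply; apply: memI.
by apply: (HM (M + 1)) => //; rewrite ltrDl.
Qed.

Theorem theorem5 (R : realType) (n : nat)
  (C : set 'rV[R]_n) (e : 'rV[R]_n)
  (A B : topologicalType) (T : A -> B -> 'rV[R]_n -> 'rV[R]_n)
  (K : set 'rV[R]_n) (h : R) (Xh : seq 'rV[R]_n)
  (v : 'rV[R]_n -> R) (lam : R) :
  (* C is a pointed closed convex cone, e* in int C* *)
  is_convex_cone C -> closed C -> pointed C ->
  interior (dual_cone C) e ->
  (* nonempty compact action sets *)
  [set: A] !=set0 -> compact [set: A] ->
  [set: B] !=set0 -> compact [set: B] ->
  (* T_ab are self-maps of Int C, nonexpansive for Funk *)
  (forall a b x, interior C x -> interior C (T a b x)) ->
  (forall a b x y, interior C x -> interior C y ->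
     Funk C (T a b x) (T a b y) <= Funk C x y) ->
  (* continuity in the actions *)
  (forall b x, interior C x -> continuous (fun a => T a b x)) ->
  (forall a x, interior C x -> continuous (fun b => T a b x)) ->
  (* compactness of images of compact sets *)
  (forall Kc, Kc `<=` interior C -> compact Kc ->
     compact [set T p.1.1 p.1.2 p.2 | p in [set p : (A * B) * 'rV[R]_n | Kc p.2]]) ->
  (* each T_ab extends continuously to C *)
  (forall a b, {within C, continuous (T a b)}) ->
  (* small cone assumption *)
  is_cone K -> closed K -> K `<=` C ->
  (forall a b x, K x -> K (T a b x)) ->
  (K `&` simplex C e) `<=` relint (simplex C e) ->
  (K `&` simplex C e) !=set0 ->
  (* discretization grid X_h *)
  0 < h ->
  [set` Xh] `<=` (K `&` simplex C e) ->
  (forall x, (K `&` simplex C e) x -> exists2 y, y \in Xh & Hil C x y < h) ->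
  (* v in Lip_1(X_h) is an additive eigenvector of hat F_h^+ *)
  Lip1 C [set` Xh] v ->
  (forall x, x \in Xh -> Fhat C T e Xh v x = lam + v x) ->
  forall x0 rho, interior C x0 -> is_game_value C T x0 rho ->
  lam - h <= rho <= lam.
Proof.
move=> CC Ccl Cpt eint Ane Acpt Bne Bcpt HT1 HT2 HTa HTb Himgc HText Kc Kcl KC
  HK Krel Kne h0 XhX cover vLip eig x0 rho ix0 hval.
have eC : dual_cone C e by apply: interior_subset.
have [a0 _] := Ane; have [b0 _] := Bne.
have [xk [Kxk Sxk]] := Kne.
have [p0 p0X _] := cover xk (conj Kxk Sxk).
have Xh_in y : y \in Xh -> K y /\ simplex C e y by move=> ys; apply: XhX.
have Xh_s y : y \in Xh -> inner y e = 1 by move=> /Xh_in [_ []].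
have Xh_int y : y \in Xh -> interior C y.
  move=> ys; apply: (@relint_int R n C e CC eC x0) => //.
  by apply: Krel; apply: Xh_in.
have Himg y : y \in Xh -> exists2 m : R, 0 < m & exists M : R, forall a b,
    m <= inner (T a b y) e /\ `|T a b y| <= M.
  move=> ys; apply: (@img_bd R n C e p0 A B T a0 b0 y eC (Xh_s p0 p0X) HT1 (Xh_int y ys)).
  apply: Himgc; last exact: compact_set1.
  by move=> z ->; apply: Xh_int.
have Kcone (t : R) x : 0 < t -> K x -> K (t *: x).
  by move=> t0 Kx; case: Kc => _; apply => //; apply: ltW.
have cover' x : K x -> simplex C e x -> exists2 y, y \in Xh & Hil C x y < h.
  by move=> Kx Sx; apply: cover.
have p0K : K p0 by case: (Xh_in p0 p0X).
apply/andP; split.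
  apply/ler_addgt0Pr => eps e0.
  have e30 : 0 < eps / 3 by rewrite divr_gt0.
  have [tu Htu] := @lower_game R n C e A B T Xh v p0 CC eC p0X Xh_s Xh_int HT1 HT2
    lam h K a0 b0 eig Himg Kcone cover' HK p0K x0 ix0 (eps / 3) e30.
  have [sgs [tus [Hmin _]]] := hval (eps / 3) e30.
  have := le_trans (Htu sgs (eps / 3) e30) (Hmin tu).
  rewrite lee_fin; lra.
apply/ler_addgt0Pr => eps e0.
have e30 : 0 < eps / 3 by rewrite divr_gt0.
have [sg Hsg] := @upper_game R n C e A B T Xh v p0 CC eC p0X Xh_s Xh_int HT1 HT2
  lam a0 b0 eig Himg x0 ix0 (eps / 3) e30.
have [sgs [tus [_ Hmax]]] := hval (eps / 3) e30.
have := le_trans (Hmax sg) (Hsg tus (eps / 3) e30).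
rewrite lee_fin; lra.
Qed.
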